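(* Let $X$ be a real locally convex Hausdorff topological vector space with dual $X^*$. Let $D\subset X$ be nonempty and of the form $$D=\Big\{\sum_{i=1}^k\lambda_iu_i+\sum_{j=1}^\ell\mu_jv_j \ \Big|\ \lambda_i\ge 0\ \forall i,\ \sum_{i=1}^k\lambda_i=1,\ \mu_j\ge 0\ \forall j\Big\}+X_0,$$ where $u_1,\dots,u_k\in X$ ($k\ge1$), $v_1,\dots,v_\ell\in X$, and $X_0\subset X$ is a closed linear subspace. Let $x^*\in X^*$ be such that the problem $\min\{\langle x^*,x\rangle\mid x\in D\}$ has a solution, and let $S(x^* )$ be its solution set. Define $$I(x^* ):=\{i_0\in\{1,\dots,k\}\mid \langle x^*,u_{i_0}\rangle\le\langle x^*,u_i\rangle\ \forall i=1,\dots,k\},\qquad J(x^* ):=\{j_0\in\{1,\dots,\ell\}\mid \langle x^*,v_{j_0}\rangle=0\}.$$ Then $$S(x^* )=\Big\{\sum_{i\in I(x^* )}\lambda_iu_i+\sum_{j\in J(x^* )}\mu_jv_j\ \Big|\ \lambda_i\ge0\ \forall i\in I(x^* ),\ \sum_{i\in I(x^* )}\lambda_i=1,\ \mu_j\ge0\ \forall j\in J(x^* )\Big\}+X_0.$$ In particular, $S(x^* )$ is a generalized polyhedral convex set.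
   Context: $\langle x^*,x\rangle$ denotes the value of $x^*\in X^*$ at $x\in X$. A subset $C\subset X$ is a generalized polyhedral convex set if there exist $x_i^*\in X^*$, $\alpha_i\in\mathbb{R}$, $i=1,\dots,p$, and a closed affine subspace $L\subset X$ with $C=\{x\in L\mid \langle x_i^*,x\rangle\le\alpha_i,\ i=1,\dots,p\}$. A sum over an empty index set is $0$. *)

(* Defs.v *)
From HB Require Import structures.
From mathcomp Require Import all_boot all_order all_algebra.
From mathcomp Require Import all_classical all_reals all_analysis.
Set Implicit Arguments. Unset Strict Implicit. Unset Printing Implicit Defensive.
Import Order.TTheory GRing.Theory Num.Theory.
Local Open Scope classical_set_scope.
Local Open Scope ring_scope.

Definition closed_subspace (R : realType) (X : tvsType R) (X0 : set X) : Prop :=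
  closed X0 /\ X0 0 /\ (forall (a : R) (x y : X), X0 x -> X0 y -> X0 (a *: x + y)).

Definition closed_affine_subspace (R : realType) (X : tvsType R) (L : set X) : Prop :=
  exists (a : X) (L0 : set X), closed_subspace L0 /\ L = [set a + y | y in L0].

Definition gen_polyhedral (R : realType) (X : tvsType R) (C : set X) : Prop :=
  exists (p : nat) (xs : 'I_p -> {linear X -> R^o}) (alpha : 'I_p -> R) (L : set X),
    (forall i, continuous (xs i : X -> R^o)) /\ closed_affine_subspace L /\
    C = [set x | L x /\ forall i, xs i x <= alpha i].

Definition hull_plus (R : realType) (X : tvsType R) (k l : nat)
  (P : pred 'I_k) (Q : pred 'I_l) (u : 'I_k -> X) (v : 'I_l -> X) (X0 : set X) : set X :=
  [set x | exists (lam : 'I_k -> R) (mu : 'I_l -> R) (x0 : X),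
     (forall i, P i -> 0 <= lam i) /\ \sum_(i < k | P i) lam i = 1 /\
     (forall j, Q j -> 0 <= mu j) /\ X0 x0 /\
     x = \sum_(i < k | P i) lam i *: u i + \sum_(j < l | Q j) mu j *: v j + x0].

Definition argmin_set (R : realType) (X : tvsType R) (f : X -> R) (D : set X) : set X :=
  [set x | D x /\ forall y, D y -> f x <= f y].

(* Main.v *)
Require Import Defs.
From HB Require Import structures.
From mathcomp Require Import all_boot all_order all_algebra.
From mathcomp Require Import all_classical all_reals all_analysis.
From mathcomp Require Import ring lra.
Import Order.TTheory GRing.Theory Num.Theory.
Local Open Scope classical_set_scope.
Local Open Scope ring_scope.
Module HBm.
Set Implicit Arguments. Unset Strict Implicit.

Section HBsec.
Variables (R : realType) (X : lmodType R) (p : X -> R).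
Hypothesis psub : forall x y, p (x + y) <= p x + p y.
Hypothesis phom : forall r x, 0 < r -> p (r *: x) = r * p x.
Variables (M : set X) (f : X -> R).
Hypothesis M0 : M 0.
Hypothesis Mlin : forall r x y, M x -> M y -> M (r *: x + y).
Hypothesis flin : forall r x y, M x -> M y -> f (r *: x + y) = r * f x + f y.
Hypothesis fp : forall x, M x -> f x <= p x.

Definition Good (G : set (X * R)) :=
  [/\ (forall x a b, G (x, a) -> G (x, b) -> a = b),
      (forall r x y a b, G (x, a) -> G (y, b) -> G (r *: x + y, r * a + b)),
      (forall x a, G (x, a) -> a <= p x) &
      (forall x, M x -> G (x, f x))].

Lemma f0 : f 0 = 0.
Proof.
have := flin (-1) M0 M0; rewrite scaleN1r oppr0 add0r mulN1r addNr //.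
Qed.

Lemma Good0 G : Good G -> G (0, 0).
Proof. by case=> _ _ _ ext; rewrite -f0; exact: ext. Qed.

Lemma GoodN G y a : Good G -> G (y, a) -> G (- y, - a).
Proof.
move=> gG Gya; have := Good0 gG; case: gG => _ lin _ _ G00.
by have := lin (-1) _ _ _ _ Gya G00; rewrite scaleN1r mulN1r !addr0.
Qed.

Lemma GoodD G y z a b : Good G -> G (y, a) -> G (z, b) -> G (y + z, a + b).
Proof.
by case=> _ lin _ _ Gya Gzb; have := lin 1 _ _ _ _ Gya Gzb; rewrite scale1r mul1r.
Qed.

Lemma GoodZ G r y a : Good G -> G (y, a) -> G (r *: y, r * a).
Proof.
move=> gG Gya; have := Good0 gG; case: gG => _ lin _ _ G00.
by have := lin r _ _ _ _ Gya G00; rewrite !addr0.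
Qed.

Lemma base_good : Good [set xa | M xa.1 /\ xa.2 = f xa.1].
Proof.
split.
- by move=> x a b /= [_ ->] [_ ->].
- move=> r x y a b /= [Mx ->] [My ->]; split; first exact: Mlin.
  by rewrite flin.
- by move=> x a /= [Mx ->]; exact: fp.
- by move=> x Mx.
Qed.

Lemma extend_step A x : Good A -> ~ (exists a, A (x, a)) ->
  exists B, Good B /\ A `<` B.
Proof.
move=> gA nx.
pose S := [set z | exists y a, A (y, a) /\ z = a - p (y - x)].
have S0 : S !=set0 by exists (0 - p (0 - x)); exists 0, 0; split => //; exact: Good0.
have Sub : forall z b, A (z, b) -> ubound S (p (z + x) - b).
  move=> z b Azb _ [y [a [Aya ->]]].
  rewrite lerBrDr addrAC lerBlDr.
  apply: (le_trans _ (psub _ _)).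
  have -> : z + x + (y - x) = y + z by rewrite addrACA addrN addr0 addrC.
  have [_ _ dom _] := gA; apply: dom.
  exact: GoodD gA Aya Azb.
have hS : has_sup S by split => //; exists (p (0 + x) - 0); apply: Sub; exact: Good0.
pose c := sup S.
have cge : forall y a, A (y, a) -> a - p (y - x) <= c.
  by move=> y a Aya; apply: sup_upper_bound => //; exists y, a.
have cle : forall z b, A (z, b) -> c <= p (z + x) - b.
  by move=> z b Azb; apply: ge_sup => //; exact: Sub.
pose B := [set yb | exists y a t, A (y, a) /\ yb = (y + t *: x, a + t * c)].
have AB : A `<=` B.
  by move=> [y a] Aya; exists y, a, 0; rewrite scale0r mul0r !addr0.
exists B; split; last first.
  split => // BA; apply: nx; exists c.
  have := BA (x, c); apply; exists 0, 0, 1; rewrite scale1r mul1r !add0r.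
  by split => //; exact: Good0.
split.
- move=> z a1 a2 [y [a [t [Aya [-> ->]]]]] [y' [a' [t' [Aya' [e ->]]]]].
  have [tt|ntt] := eqVneq t t'.
    subst t'; move/addIr: e => ey; subst y'.
    by case: gA => gr _ _ _; rewrite (gr _ _ _ Aya Aya').
  exfalso; apply: nx.
  exists ((t - t')^-1 * (a' - a)).
  have -> : x = (t - t')^-1 *: (y' - y).
    apply: (@scalerI _ _ (t - t')); first by rewrite subr_eq0.
    rewrite scalerA divff ?subr_eq0 // scale1r scalerBl.
    by apply: (addrI y); rewrite addrA e addrK [RHS]addrC subrK.
  apply: GoodZ => //; rewrite addrC [a' - a]addrC.
  by apply: GoodD => //; exact: GoodN.
- move=> r z1 z2 a1 a2 [y [a [t [Aya [-> ->]]]]] [y' [a' [t' [Aya' [-> ->]]]]].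
  exists (r *: y + y'), (r * a + a'), (r * t + t'); split.
    by case: gA => _ lin _ _; exact: lin.
  congr (_, _).
    by rewrite scalerDr scalerA scalerDl addrACA.
  by rewrite mulrDr mulrA mulrDl addrACA.
- move=> z b [y [a [t [Aya [[-> ->]]]]]].
  have [t0|t0|->] := ltrgt0P t.
  + have Ay : A (t^-1 *: y, t^-1 * a) by exact: GoodZ.
    have := cle _ _ Ay.
    rewrite -(ler_pM2l t0) mulrBr mulrA divff ?gt_eqF // mul1r.
    rewrite -phom // scalerDr scalerA divff ?gt_eqF // scale1r.
    by rewrite lerBrDl mulrC.
  + have s0 : 0 < - t by rewrite oppr_gt0.
    have Ay : A ((- t)^-1 *: y, (- t)^-1 * a) by exact: GoodZ.
    have := cge _ _ Ay.
    rewrite -(ler_pM2l s0) mulrBr mulrA divff ?gt_eqF // mul1r.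
    rewrite -phom // scalerBr scalerA divff ?gt_eqF // scale1r.
    have -> : y - (- t) *: x = y + t *: x by rewrite scaleNr opprK.
    by rewrite mulNr => h; lra.
  + by rewrite scale0r mul0r !addr0; case: gA => _ _ dom _; exact: dom.
- by move=> z Mz; apply: AB; case: gA => _ _ _ ext; exact: ext.
Qed.

Theorem hahn_banach : exists F : X -> R,
  [/\ forall r x y, F (r *: x + y) = r * F x + F y,
      forall x, F x <= p x &
      forall x, M x -> F x = f x].
Proof.
pose P := fun G : set (X * R) => G = set0 \/ Good G.
have memG : forall G xa, P G -> G xa -> Good G.
  by move=> G xa [->|//]. 
have [A [PA Amax]] : exists A, P A /\ forall B, A `<` B -> ~ P B.
  apply: Zorn_bigcup => F FP Ftot.
  case: (pselect (exists G, F G /\ G !=set0)) => [[G1 [FG1 [z G1z]]]|none]; last first.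
    left; apply/seteqP; split => // -[x a] [G FG Gxa]; apply: none.
    by exists G; split => //; exists (x, a).
  have gG1 := memG _ _ (FP _ FG1) G1z.
  have both : forall G2 G3 xa xb, F G2 -> F G3 -> G2 xa -> G3 xb ->
      exists G, [/\ F G, G xa & G xb].
    move=> G2 G3 xa xb FG2 FG3 h2 h3; have [s|s] := Ftot _ _ FG2 FG3.
      by exists G3; split => //; exact: s.
    by exists G2; split => //; exact: s.
  right; split.
  - move=> x a b [G2 FG2 h2] [G3 FG3 h3].
    have [G [FG ha hb]] := both _ _ _ _ FG2 FG3 h2 h3.
    by case: (memG _ _ (FP _ FG) ha) => gr _ _ _; exact: gr hb.
  - move=> r x y a b [G2 FG2 h2] [G3 FG3 h3].
    have [G [FG ha hb]] := both _ _ _ _ FG2 FG3 h2 h3.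
    exists G => //; case: (memG _ _ (FP _ FG) ha) => _ lin _ _; exact: lin.
  - move=> x a [G FG h]; case: (memG _ _ (FP _ FG) h) => _ _ dom _; exact: dom.
  - move=> x Mx; exists G1 => //; case: gG1 => _ _ _ ext; exact: ext.
have gA : Good A.
  case: PA => // A0; exfalso; apply: (Amax _ _ (or_intror base_good)).
  rewrite A0; split => // /(_ (0, 0)) h; have : set0 (0 : X, 0 : R).
    by apply: h; rewrite /= f0.
  by [].
have tot : forall x, exists a, A (x, a).
  move=> x; apply: contrapT => nx.
  have [B [gB AB]] := extend_step gA nx.
  exact: Amax _ AB (or_intror gB).
have [F HF] := choice tot.
exists F; case: gA => gr lin dom ext; split.
- by move=> r x y; apply: gr (HF _) _; apply: lin; exact: HF.
- by move=> x; exact: dom (HF x).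
- by move=> x Mx; apply: gr (HF x) _; exact: ext.
Qed.
End HBsec.

End HBm.
Import HBm.

Module TVm.
Set Implicit Arguments. Unset Strict Implicit.

Section tvs_facts.
Variables (R : realType) (X : tvsType R).

Lemma contD (T : topologicalType) (f g : T -> X) :
  continuous f -> continuous g -> continuous (fun z => f z + g z).
Proof.
move=> cf cg x.
apply: (@continuous_comp _ _ _ (fun z => (f z, g z)) (fun p : X * X => p.1 + p.2)).
  exact: (cvg_pair (cf x) (cg x)).
exact: add_continuous.
Qed.

Lemma contZ (T : topologicalType) (s : T -> R^o) (f : T -> X) :
  continuous s -> continuous f -> continuous (fun z => s z *: f z).
Proof.
move=> cs cf x.
apply: (@continuous_comp _ _ _ (fun z => (s z, f z)) (fun p : R^o * X => p.1 *: p.2)).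
  exact: (cvg_pair (cs x) (cf x)).
exact: scale_continuous.
Qed.

Lemma contId : continuous (fun z : X => z).
Proof. by move=> x; exact: cvg_id. Qed.

Lemma contC (T : topologicalType) (a : X) : continuous (fun _ : T => a).
Proof. exact: cst_continuous. Qed.

Lemma contCR (T : topologicalType) (a : R^o) : continuous (fun _ : T => a).
Proof. exact: cst_continuous. Qed.

Lemma convex_nbhs0 (W : set X) : nbhs (0 : X) W -> exists U : set X,
  [/\ U `<=` W, open U, U 0 &
      forall x y t, U x -> U y -> 0 <= t -> t <= 1 -> U (t *: x + (1 - t) *: y)].
Proof.
have [B Bc [Bo Bb]] := @locally_convex R X.
move=> /(Bb 0) [U [BU U0] UW]; exists U; split => //; first exact: Bo.
move=> x y t Ux Uy t0 t1.
have := Bc U (mem_set BU) x y (Itv01 t0 t1) (mem_set Ux) (mem_set Uy).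
by rewrite inE.
Qed.

End tvs_facts.

Section gauge.
Variables (R : realType) (X : tvsType R) (U : set X).
Hypotheses (Uo : open U) (U0 : U 0)
  (Uc : forall x y t, U x -> U y -> 0 <= t -> t <= 1 -> U (t *: x + (1 - t) *: y)).

Definition gT (x : X) := [set t : R | 0 < t /\ U (t^-1 *: x)].
Definition gauge (x : X) := inf (gT x).

Lemma absorb x : gT x !=set0.
Proof.
have c : continuous (fun s : R^o => s *: x).
  by apply: contZ; [move=> s; exact: cvg_id | exact: cst_continuous].
have UN : nbhs (0 *: x) U by rewrite scale0r; apply: open_nbhs_nbhs.
have /nbhs_ballP [e e0 He] := c 0 _ UN.
exists (e / 2)^-1; split; first by rewrite invr_gt0 divr_gt0.
rewrite invrK; apply: (He (e / 2)).
rewrite /ball /= sub0r normrN gtr0_norm ?divr_gt0 //.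
by rewrite ltr_pdivrMr // ltr_pMr // ltr1n.
Qed.

Lemma gT_lb x : has_lbound (gT x).
Proof. by exists 0 => t [t0 _]; exact: ltW. Qed.

Lemma gauge_ge0 x : 0 <= gauge x.
Proof. by apply: lb_le_inf; [exact: absorb| move=> t [t0 _]; exact: ltW]. Qed.

Lemma gauge_le x t : gT x t -> gauge x <= t.
Proof. by move=> h; exact: (ge_inf (gT_lb x)). Qed.

Lemma gauge_U x : U x -> gauge x <= 1.
Proof. by move=> Ux; apply: gauge_le; split => //; rewrite invr1 scale1r. Qed.

Lemma gauge_lt1 x : gauge x < 1 -> U x.
Proof.
move=> g1.
have g0 : 0 < 1 - gauge x by rewrite subr_gt0.
have [t [t0 Ut] tlt] := @inf_adherent _ (gT x) (1 - gauge x) g0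
  (conj (absorb x) (gT_lb x)).
have t1 : t <= 1 by move: tlt; rewrite /gauge addrC subrK => /ltW.
have := Uc Ut U0 (ltW t0) t1.
by rewrite scaler0 addr0 scalerA divff ?gt_eqF // scale1r.
Qed.

Lemma gauge_homle r x : 0 < r -> gauge (r *: x) <= r * gauge x.
Proof.
move=> r0; rewrite -ler_pdivrMl //; apply: lb_le_inf; first exact: absorb.
move=> t [t0 Ut]; rewrite ler_pdivrMl //; apply: gauge_le; split.
  exact: mulr_gt0.
by rewrite scalerA invfM mulrAC mulVf ?gt_eqF // mul1r.
Qed.

Lemma gauge_hom r x : 0 < r -> gauge (r *: x) = r * gauge x.
Proof.
move=> r0; apply/eqP; rewrite eq_le gauge_homle //=.
have := @gauge_homle r^-1 (r *: x); rewrite invr_gt0 => /(_ r0).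
by rewrite scalerA mulVf ?gt_eqF // scale1r ler_pdivlMl.
Qed.

Lemma gauge_sub x y : gauge (x + y) <= gauge x + gauge y.
Proof.
apply/ler_addgt0Pr => e e0.
have e20 : 0 < e / 2 by rewrite divr_gt0.
have [s [s0 Us] slt] := @inf_adherent _ (gT x) _ e20 (conj (absorb x) (gT_lb x)).
have [t [t0 Ut] tlt] := @inf_adherent _ (gT y) _ e20 (conj (absorb y) (gT_lb y)).
have st0 : 0 < s + t by rewrite addr_gt0.
have : gauge (x + y) <= s + t.
  apply: gauge_le; split => //.
  have := Uc Us Ut (t := s / (s + t)) _ _.
  have h1 : 0 <= s / (s + t) by rewrite divr_ge0 // ltW.
  have h2 : s / (s + t) <= 1 by rewrite ler_pdivrMr // mul1r lerDl ltW.
  move=> /(_ h1 h2).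
  congr U; rewrite !scalerA scalerDr; congr (_ + _); congr (_ *: _).
    by rewrite mulrAC divff ?gt_eqF // mul1r.
  by field; rewrite !gt_eqF.
move=> h; apply: (le_trans h).
have -> : gauge x + gauge y + e = (gauge x + e / 2) + (gauge y + e / 2) by field.
by apply: lerD; apply: ltW.
Qed.

End gauge.

Section mklin.
Variables (R : realType) (X : lmodType R).
Definition mklin (F : X -> R^o) (H : forall (r : R) x y, F (r *: x + y) = r *: F x + F y) : {linear X -> R^o} :=
  HB.pack_for {linear X -> R^o} F (GRing.isLinear.Build R X R^o *:%R F H).
End mklin.

Section sep.
Variables (R : realType) (X : tvsType R) (X0 : set X).
Hypotheses (cX0 : closed X0) (X00 : X0 0)
  (X0lin : forall r x y, X0 x -> X0 y -> X0 (r *: x + y)).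

Lemma X0Z r x : X0 x -> X0 (r *: x).
Proof. by move=> h; have := X0lin r h X00; rewrite addr0. Qed.
Lemma X0D x y : X0 x -> X0 y -> X0 (x + y).
Proof. by move=> hx hy; have := X0lin 1 hx hy; rewrite scale1r. Qed.
Lemma X0N x : X0 x -> X0 (- x).
Proof. by move=> h; rewrite -scaleN1r; exact: X0Z. Qed.
Lemma X0B x y : X0 x -> X0 y -> X0 (x - y).
Proof. by move=> hx hy; apply: X0D => //; exact: X0N. Qed.

Lemma lin_cont (g : {linear X -> R^o}) (U : set X) : nbhs 0 U ->
  (forall z, U z -> g z <= 1) -> continuous (g : X -> R^o).
Proof.
move=> U0 gU x; apply/cvgrPdist_lt => e e0.
pose V := [set z | U z /\ U (- z)].
have gV : forall z, V z -> `|g z| <= 1.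
  move=> z [Uz Unz]; rewrite ler_norml gU // andbT lerNl -linearN /=.
  exact: gU.
have cN : continuous (fun z : X => - z).
  have cc : continuous (fun _ : X => (-1 : R^o)) by move=> ?; exact: cst_continuous.
  move=> z; have := @contZ R X X (fun=> -1) (fun z => z) cc (@contId R X) z.
  by under eq_fun do rewrite scaleN1r.
have V0 : nbhs (0 : X) V.
  apply: filterI => //; have := cN 0 U; rewrite oppr0 => /(_ U0).
  by [].
pose h := fun z : X => (2 / e) *: (z + (- x)).
have ch : continuous h.
  apply: contZ; first exact: cst_continuous.
  by apply: contD; [exact: contId| exact: cst_continuous].
have := ch x V; rewrite /h subrr scaler0 => /(_ V0) hV.
near=> z.
have : V (h z) by near: z.
move=> /gV; rewrite /h linearZ /= linearD linearN /= normrZ.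
rewrite gtr0_norm ?divr_gt0 // -ler_pdivlMl ?divr_gt0 // invf_div => hle.
rewrite distrC; apply: (le_lt_trans hle).
by rewrite mulr1 ltr_pdivrMr // ltr_pMr // ltr1n.
Unshelve. all: by end_near.
Qed.

Lemma sep x0 : ~ X0 x0 -> exists g : {linear X -> R^o},
  [/\ continuous (g : X -> R^o), (forall y, X0 y -> g y = 0) & g x0 = 1].
Proof.
move=> nx0.
pose W := [set z : X | ~ X0 (z - x0)].
have oW : open W.
  have -> : W = (fun z => z + (- x0)) @^-1` (~` X0) by [].
  apply: open_comp; last exact: closed_openC.
  by move=> z _; apply: contD; [exact: contId| exact: cst_continuous].
have W0 : W 0 by rewrite /W /= sub0r => /X0N; rewrite opprK.
have [U [UW oU U0 Uc]] := convex_nbhs0 (open_nbhs_nbhs (conj oW W0)).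
pose M := [set z | exists y t, X0 y /\ z = y + t *: x0].
have uniq : forall y y' t t', X0 y -> X0 y' -> y + t *: x0 = y' + t' *: x0 -> t = t'.
  move=> y y' t t' Xy Xy' e; apply/eqP; apply: contrapT => /negP ntt.
  apply: nx0.
  have -> : x0 = (t - t')^-1 *: (y' - y).
    apply: (@scalerI _ _ (t - t')); first by rewrite subr_eq0.
    rewrite scalerA divff ?subr_eq0 // scale1r scalerBl.
    by apply: (addrI y); rewrite addrA e addrK [RHS]addrC subrK.
  by apply: X0Z; exact: X0B.
pose f := fun z => xget 0 [set t : R | exists y, X0 y /\ z = y + t *: x0].
have fE : forall y t, X0 y -> f (y + t *: x0) = t.
  move=> y t Xy; rewrite /f.
  set P := [set t' : R | _].
  have [y' [Xy' e]] : P (xget 0 P) by apply: xgetPex; exists t, y.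
  by apply/esym; apply: (uniq _ _ _ _ Xy Xy' e).
have M0 : M 0 by exists 0, 0; rewrite scale0r addr0.
have Mlin : forall r x y, M x -> M y -> M (r *: x + y).
  move=> r _ _ [y [t [Xy ->]]] [y' [t' [Xy' ->]]].
  exists (r *: y + y'), (r * t + t'); split; first exact: X0lin.
  by rewrite scalerDr scalerA scalerDl addrACA.
have flin : forall r x y, M x -> M y -> f (r *: x + y) = r * f x + f y.
  move=> r _ _ [y [t [Xy ->]]] [y' [t' [Xy' ->]]].
  have -> : r *: (y + t *: x0) + (y' + t' *: x0) = (r *: y + y') + (r * t + t') *: x0.
    by rewrite scalerDr scalerA scalerDl addrACA.
  by rewrite !fE //; exact: X0lin.
have fp : forall x, M x -> f x <= gauge U x.
  move=> _ [y [t [Xy ->]]]; rewrite fE //.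
  have [t0|t0] := leP t 0.
    by apply: (le_trans t0); apply: gauge_ge0 => //.
  have -> : y + t *: x0 = t *: (t^-1 *: y + x0).
    by rewrite scalerDr scalerA divff ?gt_eqF // scale1r.
  rewrite gauge_hom //.
  rewrite -{1}(mulr1 t) ler_pM2l //; rewrite leNgt; apply/negP.
  move=> /(@gauge_lt1 _ _ U oU U0 Uc) /UW; rewrite /W /= addrK; apply.
  exact: X0Z.
have psub : forall x y, gauge U (x + y) <= gauge U x + gauge U y.
  by move=> x y; apply: gauge_sub.
have phom : forall r x, 0 < r -> gauge U (r *: x) = r * gauge U x.
  by move=> r x r0; apply: gauge_hom.
have [F [Flin Fp FM]] := hahn_banach psub phom M0 Mlin flin fp.
exists (mklin Flin); split.
- apply: (@lin_cont _ U); first exact: open_nbhs_nbhs.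
  by move=> z Uz; apply: (le_trans (Fp z)); apply: gauge_U.
- move=> y Xy /=; rewrite FM; last by exists y, 0; rewrite scale0r addr0.
  by have := fE y 0 Xy; rewrite scale0r addr0.
- rewrite /= FM; last by exists 0, 1; rewrite scale1r add0r.
  by have := fE 0 1 X00; rewrite scale1r add0r.
Qed.
End sep.

End TVm.
Import TVm.

Module FMm.
Set Implicit Arguments. Unset Strict Implicit.

Section FM.
Variables (R : realType) (X : tvsType R).

Definition clin (f : X -> R) := continuous (f : X -> R^o) /\
  forall r x y, f (r *: x + y) = r * f x + f y.

Lemma clin_comb (f g : X -> R) (a b : R) : clin f -> clin g ->
  clin (fun x => a * f x + b * g x).
Proof.
move=> [cf lf] [cg lg]; split.
  apply: (@contD R R^o X (fun x => a *: (f x : R^o)) (fun x => b *: (g x : R^o))).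
    by apply: contZ => //; move=> ?; exact: cst_continuous.
  by apply: contZ => //; move=> ?; exact: cst_continuous.
by move=> r x y; rewrite lf lg; ring.
Qed.

Lemma clin_lin (g : {linear X -> R^o}) : continuous (g : X -> R^o) -> clin g.
Proof. by move=> cg; split => // r x y; rewrite linearD linearZ. Qed.

Definition upd (t : nat -> R) (m : nat) (s : R) := fun r => if r == m then s else t r.

Lemma sum_upd (V : zmodType) (h : nat -> R -> V) t m s :
  \sum_(r < m.+1) h r (upd t m s r) = \sum_(r < m) h r (t r) + h m s.
Proof.
rewrite big_ord_recr /= /upd eqxx; congr (_ + _).
by apply: eq_bigr => r _ /=; rewrite ltn_eqF.
Qed.

Definition rep (m : nat) (L0 : set X) (a : X) (w : nat -> X) (I : finType)
  (f : I -> X -> R) (c : I -> nat -> R) (al : I -> R) : set X :=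
  [set x | exists t : nat -> R, L0 (x - a - \sum_(r < m) t r *: w r) /\
     forall i, f i x + \sum_(r < m) c i r * t r <= al i].

Definition Rep m a w (S : set X) := exists (L0 : set X) (I : finType) f c al,
  [/\ closed_subspace L0, forall i : I, clin (f i) & S = @rep m L0 a w I f c al].

Lemma elimA m a w L0 (I : finType) (f : I -> X -> R) c al :
  closed_subspace L0 -> (forall i, clin (f i)) -> L0 (w m) ->
  Rep m a w (rep m.+1 L0 a w f c al).
Proof.
move=> cL0 cf Lw.
have [_ [L00 L0lin]] := cL0.
have L0D x y : L0 x -> L0 y -> L0 (x + y).
  by move=> hx hy; have := L0lin 1 _ _ hx hy; rewrite scale1r.
have L0Z r x : L0 x -> L0 (r *: x).
  by move=> h; have := L0lin r _ _ h L00; rewrite addr0.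
pose I' := (I + I * I)%type.
pose ia (e : I') := match e with inl i => i | inr (i, j) => i end.
pose ib (e : I') := match e with inl i => i | inr (i, j) => j end.
pose wa (e : I') := match e with inl i => if c i m == 0 then 1 else 0
  | inr (i, j) => if (0 < c i m) && (c j m < 0) then - c j m else 0 end.
pose wb (e : I') := match e with inl i => 0
  | inr (i, j) => if (0 < c i m) && (c j m < 0) then c i m else 0 end.
have wa0 e : 0 <= wa e.
  case: e => [i|[i j]] /=; first by case: ifP.
  by case: ifP => // /andP[_]; rewrite oppr_ge0 => /ltW.
have wb0 e : 0 <= wb e.
  by case: e => [i|[i j]] //=; case: ifP => // /andP[/ltW].
have weq e : wa e * c (ia e) m + wb e * c (ib e) m = 0.
  case: e => [i|[i j]] /=; first by case: ifP => [/eqP ->|]; rewrite ?mulr0 ?mul0r addr0.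
  by case: ifP => _; [ring | rewrite !mul0r addr0].
pose f' (e : I') x := wa e * f (ia e) x + wb e * f (ib e) x.
pose c' (e : I') r := wa e * c (ia e) r + wb e * c (ib e) r.
pose al' (e : I') := wa e * al (ia e) + wb e * al (ib e).
have sumc e (t : nat -> R) : \sum_(r < m) c' e r * t r =
    wa e * \sum_(r < m) c (ia e) r * t r + wb e * \sum_(r < m) c (ib e) r * t r.
  rewrite !mulr_sumr -big_split /=; apply: eq_bigr => r _; rewrite /c'; ring.
exists L0, I', f', c', al'; split => //.
  by move=> e; apply: clin_comb.
apply/seteqP; split => x [t [Lt Ht]].
  exists t; split.
    move: Lt; rewrite big_ord_recr /= => h.
    have -> : x - a - \sum_(r < m) t r *: w r =
      (x - a - (\sum_(i < m) t i *: w i + t m *: w m)) + t m *: w m.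
      by rewrite opprD addrA subrK.
    by apply: L0D => //; exact: L0Z.
  move=> e; rewrite sumc /f' /al'.
  have hA := Ht (ia e); have hB := Ht (ib e).
  rewrite big_ord_recr /= in hA; rewrite big_ord_recr /= in hB.
  have := weq e; have := wa0 e; have := wb0 e.
  move: hA hB; set A1 := f (ia e) x; set B1 := f (ib e) x.
  set SA := \sum_(i < m) c (ia e) i * t i; set SB := \sum_(i < m) c (ib e) i * t i.
  move=> hA hB hb ha he.
  have hA' := ler_wpM2l ha hA; have hB' := ler_wpM2l hb hB.
  have he' : (wa e * c (ia e) m + wb e * c (ib e) m) * t m = 0 by rewrite he mul0r.
  nra.
pose b i := al i - f i x - \sum_(r < m) c i r * t r.
have hb e : 0 <= wa e * b (ia e) + wb e * b (ib e).
  have := Ht e; rewrite sumc /f' /al' /b => h; nra.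
pose m0 := - \sum_(i : I) `|b i / c i m|.
pose s := \big[Order.max/m0]_(j | c j m < 0) (b j / c j m).
exists (upd t m s); split.
  rewrite (sum_upd (fun r (v : R) => v *: w r)).
  have -> : x - a - (\sum_(r < m) t r *: w r + s *: w m) =
    (x - a - \sum_(r < m) t r *: w r) + (- s) *: w m.
    by rewrite opprD addrA scaleNr.
  by apply: L0D => //; exact: L0Z.
move=> i; rewrite (sum_upd (fun r (v : R) => c i r * v)).
suff : c i m * s <= b i by rewrite /b; lra.
have [cpos|cneg|c0] := ltrgt0P (c i m).
- rewrite mulrC -ler_pdivlMr //; apply: bigmax_le.
    rewrite /m0; apply: (@le_trans _ _ (- `|b i / c i m|)); last first.
      by rewrite lerNl -normrN ler_norm.
    rewrite lerN2 (bigD1 i) //= lerDl; apply: sumr_ge0 => ? _; exact: normr_ge0.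
  move=> j cj; have := hb (inr (i, j)); rewrite /= cpos cj /= => h.
  rewrite ler_pdivlMr //.
  have bq : b j = (b j / c j m) * c j m by rewrite divfK ?lt_eqF.
  move: h; rewrite bq; set q := b j / c j m => h.
  have e : - c j m * b i + c i m * (q * c j m) = (- c j m) * (b i - q * c i m) by ring.
  by move: h; rewrite e pmulr_rge0 ?oppr_gt0 // subr_ge0 mulfK // lt_eqF.
- have lo : b i / c i m <= s := (@le_bigmax_cond _ _ I m0 i (fun j => c j m < 0) (fun j => b j / c j m) cneg).
  rewrite -(ler_nM2l cneg) in lo; apply: le_trans lo _.
  by rewrite mulrCA divff ?lt_eqF // mulr1.
- have := hb (inl i); rewrite /= c0 eqxx mul1r mul0r addr0 => h.
  by rewrite mul0r.
Qed.

Lemma elimB m a w L0 (I : finType) (f : I -> X -> R) c al :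
  closed_subspace L0 -> (forall i, clin (f i)) -> ~ L0 (w m) ->
  Rep m a w (rep m.+1 L0 a w f c al).
Proof.
move=> cL0 cf Lw.
have [clL0 [L00 L0lin]] := cL0.
have [g [cg gL0 gw]] := sep clL0 L00 L0lin Lw.
pose L0' := [set z | L0 (z - g z *: w m)].
have cL0' : closed_subspace L0'.
  split; [|split].
  - have -> : L0' = (fun z => z + (- g z) *: w m) @^-1` L0.
      by apply/seteqP; split => z /=; rewrite scaleNr.
    apply: closed_comp => //.
    move=> z _; apply: contD; first exact: contId.
    apply: contZ; last by move=> ?; exact: cst_continuous.
    have cc : continuous (fun _ : X => (-1 : R^o)) by move=> ?; exact: cst_continuous.
    have := @contZ R R^o X (fun=> -1) g cc cg.
    by under eq_fun do rewrite scaleN1r.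
  - by rewrite /L0' /= linear0 scale0r subr0.
  - move=> r x y hx hy; rewrite /L0' /= linearD.
    have -> : g (r *: x) = r * g x by rewrite linearZ.
    rewrite scalerDl opprD addrACA -scalerA -scalerBr.
    exact: L0lin.
pose f' i x := f i x + c i m * g x.
pose c' i r := c i r - c i m * g (w r).
pose al' i := al i + c i m * g a.
exists L0', I, f', c', al'; split => //.
  move=> i; have := clin_comb 1 (c i m) (cf i) (clin_lin cg).
  by rewrite /f'; under eq_fun do rewrite mul1r.
have gsum x (t : nat -> R) : g (x - a - \sum_(r < m) t r *: w r) =
    g x - g a - \sum_(r < m) t r * g (w r).
  by rewrite !linearB linear_sum /=; congr (_ - _); apply: eq_bigr => r _; rewrite linearZ.
have csum i (t : nat -> R) : \sum_(r < m) c' i r * t r =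
    \sum_(r < m) c i r * t r - c i m * \sum_(r < m) t r * g (w r).
  rewrite mulr_sumr -sumrB; apply: eq_bigr => r _; rewrite /c'; ring.
apply/seteqP; split => x [t [Lt Ht]].
  set z := x - a - \sum_(r < m) t r *: w r.
  have Lz : L0 (z - t m *: w m).
    by move: Lt; rewrite big_ord_recr /= opprD addrA.
  have gz : g z = t m.
    have := gL0 _ Lz; rewrite linearB linearZ /= gw.
    by move=> /subr0_eq ->; exact: mulr1.
  exists t; split; first by rewrite /L0' /= gz.
  move=> i; have := Ht i; rewrite big_ord_recr /= => h.
  rewrite /f' /al' csum.
  have := gsum x t; rewrite -/z gz => e.
  rewrite e !mulrBr in h; lra.
set z := x - a - \sum_(r < m) t r *: w r.
exists (upd t m (g z)); split.
  by rewrite (sum_upd (fun r (v : R) => v *: w r)) opprD addrA.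
move=> i; rewrite (sum_upd (fun r (v : R) => c i r * v)).
have := Ht i; rewrite /f' /al' csum => h.
have := gsum x t; rewrite -/z => ->.
rewrite !mulrBr; lra.
Qed.

Lemma elim_step m a w S : Rep m.+1 a w S -> Rep m a w S.
Proof.
move=> [L0 [I [f [c [al [cL0 cf ->]]]]]].
have [Lw|Lw] := pselect (L0 (w m)).
  exact: elimA.
exact: elimB.
Qed.

Lemma elim_all m a w S : Rep m a w S -> Rep 0 a w S.
Proof. by elim: m => // m IH /elim_step. Qed.

Lemma Rep0_poly a w S : Rep 0 a w S -> gen_polyhedral S.
Proof.
move=> [L0 [I [f [c [al [cL0 cf ->]]]]]].
pose xs (j : 'I_#|I|) := mklin (proj2 (cf (enum_val j))).
exists #|I|, xs, (fun j => al (enum_val j)), [set a + y | y in L0]; split.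
- by move=> j; exact: (proj1 (cf (enum_val j))).
split; first by exists a, L0.
apply/seteqP; split => x.
  move=> [t [Lt Ht]]; split.
    exists (x - a); last by rewrite addrC subrK.
    by move: Lt; rewrite big_ord0 subr0.
  by move=> j; have := Ht (enum_val j); rewrite big_ord0 addr0.
move=> [[y Ly <-] Hx]; exists (fun _ => 0); split.
  by rewrite big_ord0 subr0 addrC addKr.
move=> i; rewrite big_ord0 addr0; have := Hx (enum_rank i).
by rewrite /xs /= enum_rankK.
Qed.

End FM.

End FMm.
Import FMm.

Module Mainm.

Lemma sum_cond (V : zmodType) n (P : pred 'I_n) (F : 'I_n -> V) :
  (forall i, ~~ P i -> F i = 0) -> \sum_(i < n | P i) F i = \sum_(i < n | predT i) F i.
Proof.
move=> H; rewrite [RHS]big_mkcond [LHS]big_mkcond; apply: eq_bigr => i _ /=.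
by case: ifP => // /negbT /H ->.
Qed.

Lemma sum_delta (V : zmodType) n (j : 'I_n) (F : 'I_n -> V) :
  \sum_(i < n | predT i) (if i == j then F i else 0) = F j.
Proof.
rewrite (bigD1 j) //= eqxx big1 ?addr0 // => i /negbTE ->; done.
Qed.

Arguments sum_delta {V n} j F.
Arguments sum_cond {V n P F}.

Definition extn (T : Type) (n : nat) (F : 'I_n -> T) (d : T) (r : nat) : T :=
  if (insub r : option 'I_n) is Some i then F i else d.
Lemma extnE T n F d (i : 'I_n) : @extn T n F d i = F i.
Proof. by rewrite /extn valK. Qed.
Arguments extn {T n} F d r.
Arguments extnE {T n} F d i.
Lemma sum_pick (R : ringType) n (F : nat -> R) (i : nat) : (i < n)%N ->
  \sum_(r < n) (if (r : nat) == i then F r else 0) = F i.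
Proof.
move=> h; rewrite (bigD1 (Ordinal h)) //= eqxx big1 ?addr0 // => r.
by rewrite -val_eqE /= => /negbTE ->.
Qed.

Section main.
Variables (R : realType) (X : tvsType R) (k l : nat) (hk : (0 < k)%N)
  (u : 'I_k -> X) (v : 'I_l -> X) (X0 : set X) (hX0 : closed_subspace X0)
  (xs : {linear X -> R^o}).

Let D := hull_plus predT predT u v X0.

Lemma xs_hull (P : pred 'I_k) (Q : pred 'I_l) lam mu x0 :
  xs (\sum_(i < k | P i) lam i *: u i + \sum_(j < l | Q j) mu j *: v j + x0) =
  \sum_(i < k | P i) lam i * xs (u i) + \sum_(j < l | Q j) mu j * xs (v j) + xs x0.
Proof.
rewrite !linearD !linear_sum /=; congr (_ + _ + _); apply: eq_bigr => i _;
  by rewrite linearZ.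
Qed.

Lemma X0_xs0 : argmin_set xs D !=set0 -> forall y, X0 y -> xs y = 0.
Proof.
move=> [x [[lam [mu [x0 [l0 [l1 [m0 [Xx0 ->]]]]]]] Hmin]] y Xy.
have [_ [_ lin]] := hX0.
have Dp : forall s : R, D (\sum_(i < k | predT i) lam i *: u i + \sum_(j < l | predT j) mu j *: v j + (x0 + s *: y)).
  move=> s; exists lam, mu, (x0 + s *: y); split => //; split => //; split => //; split => //.
  by rewrite addrC; apply: lin.
have := Hmin _ (Dp 1); have := Hmin _ (Dp (-1)).
rewrite !addrA !linearD !linearZ /= => h1 h2. move: h2 h1.
rewrite scale1r scaleN1r; lra.
Qed.

Hypothesis hsol : argmin_set xs D !=set0.

Lemma xs_X0 y : X0 y -> xs y = 0.
Proof. exact: X0_xs0. Qed.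

Lemma xs_v_ge0 j : 0 <= xs (v j).
Proof.
move: hsol => [x [[lam [mu [x0 [l0 [l1 [m0 [Xx0 ->]]]]]]] Hmin]].
pose mu' := fun j' => mu j' + (if j' == j then 1 else 0).
have Dp : D (\sum_(i < k | predT i) lam i *: u i + \sum_(j < l | predT j) mu' j *: v j + x0).
  exists lam, mu', x0; split => //; split => //; split => //.
  by move=> j' _; rewrite /mu'; apply: addr_ge0; [exact: m0|]; case: ifP.
have := Hmin _ Dp; rewrite !xs_hull.
have -> : \sum_(j0 < l | predT j0) mu' j0 * xs (v j0) =
    \sum_(j0 < l | predT j0) mu j0 * xs (v j0) + xs (v j).
  rewrite -(sum_delta j (fun j0 => xs (v j0))) -big_split /=; apply: eq_bigr => j0 _.
  by rewrite /mu' mulrDl; case: ifP => _; rewrite ?mul1r ?mul0r.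
lra.
Qed.

Lemma exists_i0 : exists i0, forall i, xs (u i0) <= xs (u i).
Proof.
case: (@arg_minP _ _ 'I_k (Ordinal hk) predT (fun i => xs (u i)) isT) => i0 _ H.
by exists i0 => i; apply: H.
Qed.

Variable i0 : 'I_k.
Hypothesis Hi0 : forall i, xs (u i0) <= xs (u i).
Let mu0 := xs (u i0).

Lemma xs_D_ge x : D x -> mu0 <= xs x.
Proof.
move=> [lam [mu [x0 [l0 [l1 [m0 [Xx0 ->]]]]]]].
rewrite xs_hull xs_X0 // addr0.
apply: (@le_trans _ _ (\sum_(i < k | predT i) lam i * mu0 + 0)).
  by rewrite addr0 -mulr_suml l1 mul1r.
apply: lerD.
  by apply: ler_sum => i _; apply: ler_wpM2l; [exact: l0 | exact: Hi0].
by apply: sumr_ge0 => j _; apply: mulr_ge0; [exact: m0 | exact: xs_v_ge0].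
Qed.

Lemma D_u0 : D (u i0).
Proof.
exists (fun i => if i == i0 then 1 else 0), (fun _ => 0), 0; split.
  by move=> i _; case: ifP.
split; first by rewrite (sum_delta i0 (fun _ => (1 : R))).
split => //; split; first by have [_ []] := hX0.
rewrite addr0 (@big1 _ _ _ _ _ _ (fun j => (0 : R) *: v j)) => [|j _]; last by rewrite scale0r.
rewrite addr0.
rewrite -(sum_delta i0 u); apply: eq_bigr => i _.
by case: ifP; rewrite ?scale1r ?scale0r.
Qed.

Lemma argminE : argmin_set xs D = [set x | D x /\ xs x <= mu0].
Proof.
apply/seteqP; split => x.
  by move=> [Dx H]; split => //; exact: H _ D_u0.
move=> [Dx H]; split => // y Dy; apply: le_trans H _; exact: xs_D_ge.
Qed.

Let I := [pred i0 : 'I_k | [forall i : 'I_k, xs (u i0) <= xs (u i)]].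
Let J := [pred j0 : 'I_l | xs (v j0) == 0].

Lemma uI i : I i -> xs (u i) = mu0.
Proof.
move=> /forallP /(_ i0) h; apply/eqP; rewrite eq_le h; exact: Hi0.
Qed.

Lemma part1 : argmin_set xs D = hull_plus I J u v X0.
Proof.
rewrite argminE; apply/seteqP; split => x.
  move=> [[lam [mu [x0 [l0 [l1 [m0 [Xx0 ->]]]]]]] H].
  rewrite xs_hull xs_X0 // addr0 in H.
  have eqS : \sum_(i < k | predT i) lam i * (xs (u i) - mu0) =
      \sum_(i < k | predT i) lam i * xs (u i) - mu0.
    rewrite (eq_bigr (fun i => lam i * xs (u i) - lam i * mu0)); last by move=> i _; rewrite mulrBr.
    by rewrite sumrB -mulr_suml l1 mul1r.
  have A0 : forall i, predT i -> 0 <= lam i * (xs (u i) - mu0).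
    by move=> i _; apply: mulr_ge0; [exact: l0 | rewrite subr_ge0; exact: Hi0].
  have B0 : forall j, predT j -> 0 <= mu j * xs (v j).
    by move=> j _; apply: mulr_ge0; [exact: m0 | exact: xs_v_ge0].
  have sA : 0 <= \sum_(i < k | predT i) lam i * (xs (u i) - mu0) by apply: sumr_ge0.
  have sB : 0 <= \sum_(j < l | predT j) mu j * xs (v j) by apply: sumr_ge0.
  have eA0 : \sum_(i < k | predT i) lam i * (xs (u i) - mu0) = 0 by lra.
  have eB0 : \sum_(j < l | predT j) mu j * xs (v j) = 0 by lra.
  have eA := psumr_eq0P A0 eA0; have eB := psumr_eq0P B0 eB0.
  have lz : forall i, ~~ I i -> lam i = 0.
    move=> i /forallPn [i']; rewrite -ltNge => lt.
    have /eqP := eA i isT; rewrite mulf_eq0 => /orP[/eqP //|].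
    rewrite subr_eq0 => /eqP e.
    by move: lt; rewrite e ltNge Hi0.
  have mz : forall j, ~~ J j -> mu j = 0.
    move=> j nJ; have /eqP := eB j isT; rewrite mulf_eq0 => /orP[/eqP //|].
    by move=> /eqP e; move: nJ; rewrite /J /= e eqxx.
  exists lam, mu, x0; split; first by move=> i _; exact: l0.
  split; first by rewrite (sum_cond lz).
  split; first by move=> j _; exact: m0.
  split => //.
  rewrite (@sum_cond _ _ I (fun i => lam i *: u i)); last by move=> i /lz ->; rewrite scale0r.
  rewrite (@sum_cond _ _ J (fun j => mu j *: v j)) //.
  by move=> j /mz ->; rewrite scale0r.
move=> [lam [mu [x0 [l0 [l1 [m0 [Xx0 ->]]]]]]].
pose lam' i := if I i then lam i else 0.
pose mu' j := if J j then mu j else 0.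
have eu : \sum_(i < k | I i) lam i *: u i = \sum_(i < k | predT i) lam' i *: u i.
  rewrite -(@sum_cond _ _ I (fun i => lam' i *: u i)); last first.
    by move=> i nI; rewrite /lam' (negbTE nI) scale0r.
  by apply: eq_bigr => i Ii; rewrite /lam' Ii.
have ev : \sum_(j < l | J j) mu j *: v j = \sum_(j < l | predT j) mu' j *: v j.
  rewrite -(@sum_cond _ _ J (fun j => mu' j *: v j)); last first.
    by move=> j nJ; rewrite /mu' (negbTE nJ) scale0r.
  by apply: eq_bigr => j Jj; rewrite /mu' Jj.
split.
  exists lam', mu', x0; split; first by move=> i _; rewrite /lam'; case: ifP => // Ii; exact: l0.
  split.
    rewrite -(@sum_cond _ _ I lam'); last by move=> i nI; rewrite /lam' (negbTE nI).
    by rewrite -l1; apply: eq_bigr => i Ii; rewrite /lam' Ii.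
  split; first by move=> j _; rewrite /mu'; case: ifP => // Jj; exact: m0.
  by split => //; rewrite eu ev.
rewrite xs_hull xs_X0 // addr0.
have -> : \sum_(j < l | J j) mu j * xs (v j) = 0.
  by apply: big1 => j /eqP ->; rewrite mulr0.
have -> : \sum_(i < k | I i) lam i * xs (u i) = \sum_(i < k | I i) lam i * mu0.
  by apply: eq_bigr => i Ii; rewrite uI.
by rewrite addr0 -mulr_suml l1 mul1r.
Qed.

Definition wv (r : nat) : X := if (r < k)%N then extn u 0 r else extn v 0 (r - k).

Lemma sum_w (t : nat -> R) : \sum_(r < k + l) t r *: wv r =
  \sum_(i < k | predT i) t i *: u i + \sum_(j < l | predT j) t (k + j)%N *: v j.
Proof.
rewrite big_split_ord /=; congr (_ + _); apply: eq_bigr => i _; rewrite /wv /=.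
  by rewrite ltn_ord extnE.
by rewrite ltnNge leq_addr /= addKn extnE.
Qed.

Lemma sum_k (t : nat -> R) (s : R) :
  \sum_(r < k + l) (if (r < k)%N then s else 0) * t r = s * \sum_(i < k | predT i) t i.
Proof.
rewrite big_split_ord /= [X in _ + X]big1 ?addr0 => [|j _]; last by rewrite ltnNge leq_addr mul0r.
by rewrite mulr_sumr; apply: eq_bigr => i _; rewrite ltn_ord.
Qed.

Definition Cn := (('I_k + 'I_l) + bool + unit)%type.
Definition fC (e : Cn) : X -> R := match e with inr _ => fun x => xs x | _ => fun _ => 0 end.
Definition cC (e : Cn) : nat -> R := match e with
 | inl (inl (inl i)) => fun r => if r == i then -1 else 0
 | inl (inl (inr j)) => fun r => if r == (k + j)%N then -1 else 0
 | inl (inr b) => fun r => if (r < k)%N then (if b then 1 else -1) else 0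
 | inr _ => fun _ => 0 end.
Definition alC (e : Cn) : R := match e with inl (inr b) => if b then 1 else -1
  | inr _ => mu0 | _ => 0 end.

Lemma sum_cC_i (t : nat -> R) (i : 'I_k) : \sum_(r < k + l) cC (inl (inl (inl i))) r * t r = - t i.
Proof.
rewrite -(@sum_pick _ (k + l) (fun r => - t r) i) ?ltn_addr //.
by apply: eq_bigr => r _ /=; case: ifP; rewrite ?mulN1r ?mul0r.
Qed.

Lemma sum_cC_j (t : nat -> R) (j : 'I_l) : \sum_(r < k + l) cC (inl (inl (inr j))) r * t r = - t (k + j)%N.
Proof.
rewrite -(@sum_pick _ (k + l) (fun r => - t r) (k + j)%N) ?ltn_add2l //.
by apply: eq_bigr => r _ /=; case: ifP; rewrite ?mulN1r ?mul0r.
Qed.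

Lemma part2_rep : argmin_set xs D = rep (k + l) X0 0 wv fC cC alC.
Proof.
rewrite argminE; apply/seteqP; split => x.
  move=> [[lam [mu [x0 [l0 [l1 [m0 [Xx0 ->]]]]]]] H].
  pose t r := if (r < k)%N then extn lam 0 r else extn mu 0 (r - k).
  have tl : forall i : 'I_k, t i = lam i by move=> i; rewrite /t ltn_ord extnE.
  have tm : forall j : 'I_l, t (k + j)%N = mu j.
    by move=> j; rewrite /t ltnNge leq_addr /= addKn extnE.
  exists t; split.
    rewrite sum_w subr0.
    have -> : \sum_(i < k | predT i) t i *: u i = \sum_(i < k | predT i) lam i *: u i.
      by apply: eq_bigr => i _; rewrite tl.
    have -> : \sum_(j < l | predT j) t (k + j)%N *: v j = \sum_(j < l | predT j) mu j *: v j.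
      by apply: eq_bigr => j _; rewrite tm.
    by rewrite addrC addKr.
  have st : \sum_(i < k | predT i) t i = 1 by rewrite -l1; apply: eq_bigr => i _; rewrite tl.
  case=> [[[i|j]|b]|[]] /=.
  - by rewrite sum_cC_i add0r tl oppr_le0; exact: l0.
  - by rewrite sum_cC_j add0r tm oppr_le0; exact: m0.
  - by rewrite sum_k st add0r mulr1.
  - have -> : \sum_(r < k + l) 0 * t r = 0 :> R by apply: big1 => r _; rewrite mul0r.
    by rewrite addr0.
move=> [t [Lt Ht]].
rewrite subr0 sum_w in Lt.
split; last by have := Ht (inr tt); rewrite /=; under eq_bigr do rewrite mul0r; rewrite big1_eq addr0.
exists (fun i => t i), (fun j => t (k + j)%N),
  (x - (\sum_(i < k | predT i) t i *: u i + \sum_(j < l | predT j) t (k + j)%N *: v j)).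
split; first by move=> i _; have := Ht (inl (inl (inl i))); rewrite /= sum_cC_i add0r oppr_le0.
split.
  have := Ht (inl (inr true)); have := Ht (inl (inr false)).
  by rewrite /= !sum_k !add0r; lra.
split; first by move=> j _; have := Ht (inl (inl (inr j))); rewrite /= sum_cC_j add0r oppr_le0.
by split => //; rewrite addrC subrK.
Qed.

End main.

End Mainm.
Import Mainm.

Theorem proposition3p6 (R : realType) (X : tvsType R) (hX : hausdorff_space X)
  (k l : nat) (hk : (0 < k)%N) (u : 'I_k -> X) (v : 'I_l -> X) (X0 : set X)
  (hX0 : closed_subspace X0)
  (hD : hull_plus predT predT u v X0 !=set0)
  (xs : {linear X -> R^o}) (hxs : continuous (xs : X -> R^o))
  (hsol : argmin_set xs (hull_plus predT predT u v X0) !=set0) :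
  let I := [pred i0 : 'I_k | [forall i : 'I_k, xs (u i0) <= xs (u i)]] in
  let J := [pred j0 : 'I_l | xs (v j0) == 0] in
  argmin_set xs (hull_plus predT predT u v X0) = hull_plus I J u v X0 /\
  gen_polyhedral (argmin_set xs (hull_plus predT predT u v X0)).
Proof.
move=> I J.
have [i0 Hi0] := @exists_i0 R X k hk u xs.
split; first exact: (@part1 R X k l u v X0 hX0 xs hsol i0 Hi0).
rewrite (@part2_rep R X k l u v X0 hX0 xs hsol i0 Hi0).
apply: Rep0_poly; apply: elim_all.
exists X0, (Cn k l), (@fC R X k l xs), (@cC R k l), (@alC R X k l u xs i0); split => //.
case=> [[[i|j]|b]|[]] /=; try (split; [by move=> ?; exact: cst_continuous | by move=> *; rewrite mulr0 addr0]).
exact: clin_lin.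
Qed.
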